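(* Let $\phi_1,\phi_2,\phi_3\in\mathbb{R}$ satisfy $\phi_i-\phi_j\neq 2n\pi$ for all $i\neq j$ and all integers $n$, and fix $0<R<1$. For $A>0$ and $(b_1,b_2)\in\mathbb{R}^2$ with $b_1^2+b_2^2\le R$, define $$K(b_1,b_2;\phi)=\frac{1}{\left[(b_1-\cos\phi)^2+(b_2-\sin\phi)^2\right]^2}$$ and the data map $$\mathcal{A}(A,b_1,b_2)=\big(A\,K(b_1,b_2;\phi_1),\;A\,K(b_1,b_2;\phi_2),\;A\,K(b_1,b_2;\phi_3)\big).$$ Then the parameters $(A,b_1,b_2)$ (the area and center of the anomaly) are uniquely determined by the data $\mathcal{A}(A,b_1,b_2)$; that is, $\mathcal{A}$ is injective on $\{(A,b_1,b_2): A>0,\ b_1^2+b_2^2\le R\}$.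
   Context: Setting: a small (elliptical) conductivity anomaly of area $A$ centered at $(b_1,b_2)$ inside the unit disc, with small conductivity contrast against a constant background. Under linearization and to leading order in the anomaly size, the measurement (tangential derivative of the perturbation potential) produced by a boundary dipole placed at $(\cos\phi,\sin\phi)$ equals $A\,K(b_1,b_2;\phi)$, where $K(b_1,b_2;\phi)=|\nabla U_0(b_1,b_2)|^2$ with $U_0$ the dipole potential; measurements are taken at three angles $\phi_1,\phi_2,\phi_3$. *)

(* Defs.v *)
From Stdlib Require Import Reals.
Open Scope R_scope.

Definition K (b1 b2 phi : R) : R :=
  1 / ((b1 - cos phi) ^ 2 + (b2 - sin phi) ^ 2) ^ 2.

Definition data_map (phi1 phi2 phi3 : R) (A b1 b2 : R) : R * R * R :=
  (A * K b1 b2 phi1, A * K b1 b2 phi2, A * K b1 b2 phi3).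

Definition admissible (Rad A b1 b2 : R) : Prop :=
  0 < A /\ b1 ^ 2 + b2 ^ 2 <= Rad.

(* Main.v *)
Require Import Defs.
From Stdlib Require Import Reals ZArith Lra.
Open Scope R_scope.

Lemma sc1 x : sin x ^ 2 + cos x ^ 2 = 1.
Proof. pose proof (sin2_cos2 x) as H. unfold Rsqr in H. lra. Qed.

Lemma circ_distinct p q : (forall n : Z, p - q <> 2 * IZR n * PI) ->
  0 < (cos p - cos q) ^ 2 + (sin p - sin q) ^ 2.
Proof.
  intros H.
  pose proof (pow2_ge_0 (cos p - cos q)). pose proof (pow2_ge_0 (sin p - sin q)).
  assert (h0 : 0 <= (cos p - cos q) ^ 2 + (sin p - sin q) ^ 2) by lra.
  destruct (Rle_lt_or_eq_dec _ _ h0) as [h|h]; [exact h|].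
  exfalso.
  assert (Hc : cos p = cos q) by nra.
  assert (Hs : sin p = sin q) by nra.
  assert (Hq1 : cos (p - q) = 1).
  { rewrite cos_minus, Hc, Hs. pose proof (sc1 q). lra. }
  replace (p - q) with (2 * ((p - q) / 2)) in Hq1 by field.
  rewrite cos_2a_sin in Hq1.
  assert (Hq2 : sin ((p - q) / 2) = 0) by nra.
  destruct (sin_eq_0_0 _ Hq2) as [k Hk].
  apply (H k). lra.
Qed.

Lemma line_circle x1 y1 x2 y2 x3 y3 a b e :
  x1^2 + y1^2 = 1 -> x2^2 + y2^2 = 1 -> x3^2 + y3^2 = 1 ->
  0 < (x1 - x2)^2 + (y1 - y2)^2 ->
  0 < (x1 - x3)^2 + (y1 - y3)^2 ->
  0 < (x2 - x3)^2 + (y2 - y3)^2 ->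
  a * x1 + b * y1 = e -> a * x2 + b * y2 = e -> a * x3 + b * y3 = e ->
  a = 0 /\ b = 0.
Proof.
  intros C1 C2 C3 D12 D13 D23 E1 E2 E3.
  assert (cross : forall p1 q1 p2 q2, p1^2 + q1^2 = 1 -> p2^2 + q2^2 = 1 ->
     0 < (p1 - p2)^2 + (q1 - q2)^2 -> a * p1 + b * q1 = e -> a * p2 + b * q2 = e ->
     a * (q1 + q2) - b * (p1 + p2) = 0).
  { intros p1 q1 p2 q2 Hp1 Hp2 Hd Hx1 Hx2.
    assert (O1 : a * (p1 - p2) + b * (q1 - q2) = 0) by lra.
    assert (O2 : (p1 + p2) * (p1 - p2) + (q1 + q2) * (q1 - q2) = 0).
    { replace ((p1 + p2) * (p1 - p2) + (q1 + q2) * (q1 - q2)) with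
        ((p1^2 + q1^2) - (p2^2 + q2^2)) by ring. lra. }
    assert (M1 : (a * (q1 + q2) - b * (p1 + p2)) * (p1 - p2) = 0).
    { replace ((a * (q1 + q2) - b * (p1 + p2)) * (p1 - p2)) with
        ((q1 + q2) * (a * (p1 - p2) + b * (q1 - q2)) - b * ((p1 + p2) * (p1 - p2) + (q1 + q2) * (q1 - q2))) by ring.
      rewrite O1, O2. ring. }
    assert (M2 : (a * (q1 + q2) - b * (p1 + p2)) * (q1 - q2) = 0).
    { replace ((a * (q1 + q2) - b * (p1 + p2)) * (q1 - q2)) with
        (a * ((p1 + p2) * (p1 - p2) + (q1 + q2) * (q1 - q2)) - (p1 + p2) * (a * (p1 - p2) + b * (q1 - q2))) by ring.
      rewrite O1, O2. ring. }
    set (c := a * (q1 + q2) - b * (p1 + p2)) in *.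
    assert (M3 : (c * c) * ((p1 - p2)^2 + (q1 - q2)^2) = 0).
    { replace ((c * c) * ((p1 - p2)^2 + (q1 - q2)^2)) with
        ((c * (p1 - p2))^2 + (c * (q1 - q2))^2) by ring. rewrite M1, M2. ring. }
    apply Rmult_integral in M3. destruct M3 as [M3|M3]; [|lra].
    apply Rmult_integral in M3. destruct M3; assumption. }
  pose proof (cross _ _ _ _ C1 C2 D12 E1 E2) as X12.
  pose proof (cross _ _ _ _ C1 C3 D13 E1 E3) as X13.
  assert (Cr : a * (y2 - y3) - b * (x2 - x3) = 0) by lra.
  assert (Dt : a * (x2 - x3) + b * (y2 - y3) = 0) by lra.
  assert (Hw : (a^2 + b^2) * ((x2 - x3)^2 + (y2 - y3)^2) = 0).
  { replace ((a^2 + b^2) * ((x2 - x3)^2 + (y2 - y3)^2)) with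
      ((a * (y2 - y3) - b * (x2 - x3))^2 + (a * (x2 - x3) + b * (y2 - y3))^2) by ring.
    rewrite Cr, Dt. ring. }
  assert (a^2 + b^2 = 0).
  { apply Rmult_integral in Hw. destruct Hw; [assumption| lra]. }
  pose proof (pow2_ge_0 a). pose proof (pow2_ge_0 b).
  assert (a^2 = 0) by lra. assert (b^2 = 0) by lra.
  split; [destruct (Req_dec a 0) as [|n]; [assumption|exfalso; apply (pow_nonzero a 2 n); assumption] | destruct (Req_dec b 0) as [|n]; [assumption|exfalso; apply (pow_nonzero b 2 n); assumption]].
Qed.

Theorem theorem1 (phi1 phi2 phi3 Rad : R)
  (h12 : forall n : Z, phi1 - phi2 <> 2 * IZR n * PI)
  (h13 : forall n : Z, phi1 - phi3 <> 2 * IZR n * PI)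
  (h23 : forall n : Z, phi2 - phi3 <> 2 * IZR n * PI)
  (hR0 : 0 < Rad) (hR1 : Rad < 1) :
  forall A b1 b2 A' b1' b2' : R,
    admissible Rad A b1 b2 ->
    admissible Rad A' b1' b2' ->
    data_map phi1 phi2 phi3 A b1 b2 = data_map phi1 phi2 phi3 A' b1' b2' ->
    A = A' /\ b1 = b1' /\ b2 = b2'.
Proof.
  intros A b1 b2 A' b1' b2' [hA hb] [hA' hb'] Hd.
  unfold data_map in Hd.
  assert (E1 : A * K b1 b2 phi1 = A' * K b1' b2' phi1) by (apply (f_equal (fun t => fst (fst t))) in Hd; exact Hd).
  assert (E2 : A * K b1 b2 phi2 = A' * K b1' b2' phi2) by (apply (f_equal (fun t => snd (fst t))) in Hd; exact Hd).
  assert (E3 : A * K b1 b2 phi3 = A' * K b1' b2' phi3) by (apply (f_equal (fun t => snd t)) in Hd; exact Hd).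
  clear Hd. unfold K in E1, E2, E3.
  pose proof (circ_distinct _ _ h12) as D12.
  pose proof (circ_distinct _ _ h13) as D13.
  pose proof (circ_distinct _ _ h23) as D23.
  pose proof (sc1 phi1) as C1. pose proof (sc1 phi2) as C2. pose proof (sc1 phi3) as C3.
  assert (Dpos : forall c d x y, c^2 + d^2 = 1 -> x^2 + y^2 < 1 ->
            0 < (x - c)^2 + (y - d)^2).
  { intros c d x y Hcd Hxy.
    pose proof (pow2_ge_0 (x - c)). pose proof (pow2_ge_0 (y - d)).
    assert (h0 : 0 <= (x - c)^2 + (y - d)^2) by lra.
    destruct (Rle_lt_or_eq_dec _ _ h0) as [h|h]; [exact h|].
    exfalso. assert (x = c) by nra. assert (y = d) by nra. subst. lra. }
  set (d1 := (b1 - cos phi1)^2 + (b2 - sin phi1)^2) in *.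
  set (d2 := (b1 - cos phi2)^2 + (b2 - sin phi2)^2) in *.
  set (d3 := (b1 - cos phi3)^2 + (b2 - sin phi3)^2) in *.
  set (e1 := (b1' - cos phi1)^2 + (b2' - sin phi1)^2) in *.
  set (e2 := (b1' - cos phi2)^2 + (b2' - sin phi2)^2) in *.
  set (e3 := (b1' - cos phi3)^2 + (b2' - sin phi3)^2) in *.
  assert (P1 : 0 < d1) by (apply Dpos; lra).
  assert (P2 : 0 < d2) by (apply Dpos; lra).
  assert (P3 : 0 < d3) by (apply Dpos; lra).
  assert (Q1 : 0 < e1) by (apply Dpos; lra).
  assert (Q2 : 0 < e2) by (apply Dpos; lra).
  assert (Q3 : 0 < e3) by (apply Dpos; lra).
  assert (F1 : A * e1^2 = A' * d1^2).
  { replace (A * e1^2) with ((A * (1 / d1^2)) * (d1^2 * e1^2)) by (field; lra). rewrite E1. field; lra. }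
  assert (F2 : A * e2^2 = A' * d2^2).
  { replace (A * e2^2) with ((A * (1 / d2^2)) * (d2^2 * e2^2)) by (field; lra). rewrite E2. field; lra. }
  assert (F3 : A * e3^2 = A' * d3^2).
  { replace (A * e3^2) with ((A * (1 / d3^2)) * (d3^2 * e3^2)) by (field; lra). rewrite E3. field; lra. }
  set (k := e1 / d1).
  assert (Hk : 0 < k) by (unfold k; apply Rdiv_lt_0_compat; lra).
  assert (K1 : e1 = k * d1) by (unfold k; field; try lra).
  assert (Ak : A' = A * k^2).
  { rewrite K1 in F1. apply Rmult_eq_reg_r with (d1^2).
    - rewrite <- F1. ring.
    - apply pow_nonzero. lra. }
  assert (sq_eq : forall u v, 0 < u -> 0 < v -> u^2 = v^2 -> u = v).
  { intros u v hu hv huv.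
    assert (hm : (u - v) * (u + v) = 0) by (replace ((u - v) * (u + v)) with (u^2 - v^2) by ring; lra).
    apply Rmult_integral in hm. destruct hm; lra. }
  assert (K2 : e2 = k * d2).
  { apply sq_eq; [lra | apply Rmult_lt_0_compat; lra |].
    apply Rmult_eq_reg_l with A; [|lra]. rewrite F2, Ak. ring. }
  assert (K3 : e3 = k * d3).
  { apply sq_eq; [lra | apply Rmult_lt_0_compat; lra |].
    apply Rmult_eq_reg_l with A; [|lra]. rewrite F3, Ak. ring. }
  set (a := b1' - k * b1). set (b := b2' - k * b2).
  set (e := (b1'^2 + b2'^2 + 1 - k * (b1^2 + b2^2 + 1)) / 2).
  assert (L : forall c s, c^2 + s^2 = 1 ->
     (b1' - c)^2 + (b2' - s)^2 = k * ((b1 - c)^2 + (b2 - s)^2) ->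
     a * c + b * s = e).
  { intros c s Hcs H. unfold a, b, e.
    apply Rmult_eq_reg_l with 2; [|lra].
    replace (2 * ((b1' - k * b1) * c + (b2' - k * b2) * s)) with
      ((b1'^2 + b2'^2 + (c^2 + s^2)) - k * (b1^2 + b2^2 + (c^2 + s^2)) - ((b1' - c)^2 + (b2' - s)^2 - k * ((b1 - c)^2 + (b2 - s)^2))) by ring.
    rewrite H, Hcs. field. }
  assert (G1 : a * cos phi1 + b * sin phi1 = e) by (apply L; [lra | exact K1]).
  assert (G2 : a * cos phi2 + b * sin phi2 = e) by (apply L; [lra | exact K2]).
  assert (G3 : a * cos phi3 + b * sin phi3 = e) by (apply L; [lra | exact K3]).
  destruct (line_circle (cos phi1) (sin phi1) (cos phi2) (sin phi2) (cos phi3) (sin phi3)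
     a b e) as [Ha Hb]; try lra; try assumption.
  assert (He : e = 0) by (rewrite Ha, Hb in G1; lra).
  unfold a, b, e in *.
  assert (B1 : b1' = k * b1) by lra.
  assert (B2 : b2' = k * b2) by lra.
  rewrite B1, B2 in He.
  assert (Hfac : (k - 1) * (k * (b1^2 + b2^2) - 1) = 0).
  { replace ((k - 1) * (k * (b1^2 + b2^2) - 1)) with
      (2 * (((k * b1)^2 + (k * b2)^2 + 1 - k * (b1^2 + b2^2 + 1)) / 2)) by field.
    rewrite He. ring. }
  assert (k = 1).
  { apply Rmult_integral in Hfac. destruct Hfac; [lra|].
    exfalso. assert (hkr : k * (b1^2 + b2^2) = 1) by lra.
    assert (hb2 : (k * b1)^2 + (k * b2)^2 = k * (k * (b1^2 + b2^2))) by ring.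
    rewrite hkr in hb2. rewrite B1, B2 in hb'.
    assert (k < 1) by lra.
    assert (k * (b1^2 + b2^2) < k * 1) by (apply Rmult_lt_compat_l; lra).
    lra. }
  rewrite H in Ak, B1, B2. split; [rewrite Ak; ring | split; [rewrite B1; ring | rewrite B2; ring]].
Qed.
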